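(* Let $\mathbb{E}$ be a finite-dimensional real inner-product space and $\mathcal{C}\subseteq\mathbb{E}$ a compact convex set. Then the nonempty exposed faces of $\mathcal{C}^\circ$ other than $\mathcal{C}^\circ$ itself are precisely the nonempty sets of the form \[ F_{\bar x}:=\{y\in N_{\mathcal{C}}(\bar x) : \langle y,\bar x\rangle=1\} \] as $\bar x$ ranges over $\mathcal{C}$. Moreover, for any such face, $\operatorname{relint}(F_{\bar x})=\{y\in\operatorname{relint}(N_{\mathcal{C}}(\bar x)) : \langle y,\bar x\rangle=1\}$.
   Context: $\mathcal{C}^\circ:=\{y\in\mathbb{E}^*:\langle y,x\rangle\le1\ \forall x\in\mathcal{C}\}$ is the polar. $N_{\mathcal{C}}(\bar x):=\{y\in\mathbb{E}^*:\langle y,x\rangle\le\langle y,\bar x\rangle\ \forall x\in\mathcal{C}\}$ is the normal cone. An exposed face of a convex set $D$ is a set of the form $D\cap H$ for a supporting hyperplane $H$ of $D$. $\operatorname{relint}$ denotes relative interior. *)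

(* Defs.v *)
From HB Require Import structures.
From mathcomp Require Import all_boot all_order all_algebra.
From mathcomp Require Import all_classical all_reals all_analysis.
Set Implicit Arguments. Unset Strict Implicit. Unset Printing Implicit Defensive.
Import Order.TTheory GRing.Theory Num.Theory numFieldTopology.Exports numFieldNormedType.Exports.
Local Open Scope classical_set_scope.
Local Open Scope ring_scope.

(* The finite-dimensional real inner-product space E is modelled as
   'rV[R]_n with the standard inner product; E^* is identified with E
   via the inner product (Riesz). *)
Definition ip {R : realType} {n : nat} (u v : 'rV[R]_n) : R :=
  \sum_(i < n) u 0 i * v 0 i.

Definition polar {R : realType} {n : nat} (C : set 'rV[R]_n) : set 'rV[R]_n :=
  [set y | forall x, C x -> ip y x <= 1].

Definition normal_cone {R : realType} {n : nat} (C : set 'rV[R]_n)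
  (xbar : 'rV[R]_n) : set 'rV[R]_n :=
  [set y | forall x, C x -> ip y x <= ip y xbar].

Definition supporting_hyperplane {R : realType} {n : nat} (D : set 'rV[R]_n)
  (H : set 'rV[R]_n) : Prop :=
  exists (a : 'rV[R]_n) (b : R), a != 0 /\
    H = [set y | ip a y = b] /\
    (forall y, D y -> ip a y <= b) /\
    (exists y, D y /\ ip a y = b).

Definition exposed_face {R : realType} {n : nat} (D F : set 'rV[R]_n) : Prop :=
  exists H, supporting_hyperplane D H /\ F = D `&` H.

Definition affine_hull {R : realType} {n : nat} (S : set 'rV[R]_n) : set 'rV[R]_n :=
  [set x | exists (k : nat) (p : 'I_k -> 'rV[R]_n) (w : 'I_k -> R),
     (forall i, S (p i)) /\ \sum_(i < k) w i = 1 /\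
     x = \sum_(i < k) w i *: p i].

Definition relint {R : realType} {n : nat} (S : set 'rV[R]_n) : set 'rV[R]_n :=
  [set x | S x /\ exists eps : R, 0 < eps /\
     forall y, affine_hull S y -> ip (y - x) (y - x) < eps ^+ 2 -> S y].

Definition Fx {R : realType} {n : nat} (C : set 'rV[R]_n) (xbar : 'rV[R]_n)
  : set 'rV[R]_n :=
  [set y | normal_cone C xbar y /\ ip y xbar = 1].

(* Main.v *)
Require Import Defs.
From HB Require Import structures.
From mathcomp Require Import all_boot all_order all_algebra.
From mathcomp Require Import all_classical all_reals all_analysis.
From mathcomp Require Import ring lra.
Import Order.TTheory GRing.Theory Num.Theory numFieldTopology.Exports numFieldNormedType.Exports.
Local Open Scope classical_set_scope.
Local Open Scope ring_scope.

Section IP.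
Variables (R : realType) (n : nat).
Implicit Types (u v w : 'rV[R]_n).
Local Notation ip := (@ip R n).

Lemma ipC u v : ip u v = ip v u.
Proof. by apply: eq_bigr => i _; rewrite mulrC. Qed.
Lemma ipDl u v w : ip (u + v) w = ip u w + ip v w.
Proof. by rewrite /Defs.ip -big_split; apply: eq_bigr => i _; rewrite mxE mulrDl. Qed.
Lemma ipZl (a : R) u w : ip (a *: u) w = a * ip u w.
Proof. by rewrite /Defs.ip mulr_sumr; apply: eq_bigr => i _; rewrite mxE mulrA. Qed.
Lemma ipNl u w : ip (- u) w = - ip u w.
Proof. by rewrite /Defs.ip -sumrN; apply: eq_bigr => i _; rewrite mxE mulNr. Qed.
Lemma ipBl u v w : ip (u - v) w = ip u w - ip v w.
Proof. by rewrite ipDl ipNl. Qed.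
Lemma ip0l w : ip 0 w = 0.
Proof. by rewrite /Defs.ip big1 // => i _; rewrite mxE mul0r. Qed.
Lemma ipDr u v w : ip w (u + v) = ip w u + ip w v.
Proof. by rewrite ipC ipDl ipC (ipC v). Qed.
Lemma ipZr (a : R) u w : ip w (a *: u) = a * ip w u.
Proof. by rewrite ipC ipZl ipC. Qed.
Lemma ipNr u w : ip w (- u) = - ip w u.
Proof. by rewrite ipC ipNl ipC. Qed.
Lemma ipBr u v w : ip w (u - v) = ip w u - ip w v.
Proof. by rewrite ipDr ipNr. Qed.
Lemma ip0r w : ip w 0 = 0.
Proof. by rewrite ipC ip0l. Qed.
Lemma ip_suml k (F : 'I_k -> 'rV[R]_n) w :
  ip (\sum_(i < k) F i) w = \sum_(i < k) ip (F i) w.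
Proof.
elim: k F => [|k IH] F; first by rewrite !big_ord0 ip0l.
by rewrite !big_ord_recr /= ipDl IH.
Qed.
Lemma ipQ_ge0 u : 0 <= ip u u.
Proof. by apply: sumr_ge0 => i _; rewrite -expr2 sqr_ge0. Qed.
Lemma ipQ_eq0 u : ip u u = 0 -> u = 0.
Proof.
move=> /eqP; rewrite psumr_eq0; last by move=> i _; rewrite -expr2 sqr_ge0.
move=> /allP H; apply/rowP => i; rewrite mxE.
have := H i (mem_index_enum i); rewrite /= -expr2 sqrf_eq0.
by move/eqP.
Qed.
Lemma ipQ_gt0 u : u != 0 -> 0 < ip u u.
Proof.
move=> u0; rewrite lt_neqAle ipQ_ge0 andbT eq_sym; apply/negP => /eqP/ipQ_eq0.
by move/eqP; rewrite (negPf u0).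
Qed.
Lemma ipQ_expand u v : ip (u + v) (u + v) = ip u u + 2 * ip u v + ip v v.
Proof. rewrite !ipDl !ipDr (ipC v u); ring. Qed.
Lemma ip2_le u v : 2 * ip u v <= ip u u + ip v v.
Proof.
have := ipQ_ge0 (u - v).
rewrite !ipBl !ipBr (ipC v u) => H. lra.
Qed.
Lemma ipQD_le u v : ip (u + v) (u + v) <= 2 * ip u u + 2 * ip v v.
Proof. rewrite ipQ_expand; have := ip2_le u v; lra. Qed.
Lemma ipQZ (a : R) u : ip (a *: u) (a *: u) = a ^+ 2 * ip u u.
Proof. by rewrite ipZl ipZr mulrA expr2. Qed.
Lemma CS u v : ip u v ^+ 2 <= ip u u * ip v v.
Proof.
have [/ipQ_eq0 ->|Qv] := eqVneq (ip v v) 0.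
  by rewrite ip0r expr0n /= ip0r mulr0.
have Qv0 : 0 < ip v v by rewrite lt_neqAle eq_sym Qv ipQ_ge0.
have := ipQ_ge0 (ip v v *: u - ip u v *: v).
rewrite !ipBl !ipBr !ipZl !ipZr (ipC v u) => H.
have : 0 <= ip v v * (ip u u * ip v v - ip u v ^+ 2) by rewrite -[X in _ <= X]/(_ : R); nra.
by rewrite pmulr_rge0 // subr_ge0.
Qed.
End IP.
Lemma cont_sum (R : realType) n k (F : 'I_k -> 'rV[R]_n -> R) :
  (forall i, continuous (F i)) -> continuous (fun x => \sum_(i < k) F i x).
Proof.
elim: k F => [|k IH] F cF.
  have -> : (fun x : 'rV[R]_n => \sum_(i < 0) F i x) = fun=> 0 by apply/funext => x; rewrite big_ord0.
  exact: cst_continuous.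
move=> x.
have -> : (fun x => \sum_(i < k.+1) F i x) =
   (fun x => \sum_(i < k) F (widen_ord (leqnSn k) i) x) + F ord_max.
  by apply/funext => y; rewrite big_ord_recr.
apply: continuousD; first exact: IH.
exact: cF.
Qed.

Lemma cont_ip (R : realType) n (w : 'rV[R]_n) : continuous (fun x => ip w x).
Proof.
apply: cont_sum => i x; apply: continuousM; first exact: cst_continuous.
exact: coord_continuous.
Qed.

Lemma cont_dist (R : realType) n (z : 'rV[R]_n) : continuous (fun x : 'rV[R]_n => ip (z - x) (z - x)).
Proof.
apply: cont_sum => i.
have -> : (fun y : 'rV[R]_n => (z - y) 0 i * (z - y) 0 i) =
   (fun y : 'rV[R]_n => (z 0 i - y 0 i)) \* (fun y : 'rV[R]_n => (z 0 i - y 0 i)).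
  by apply/funext => y; rewrite /= !mxE.
move=> x; apply: continuousM; apply: continuousB; (exact: cst_continuous || exact: coord_continuous).
Qed.
Section Aff.
Variables (R : realType) (n : nat).
Implicit Types (S T : set 'rV[R]_n).
Lemma aff_in S x : S x -> affine_hull S x.
Proof.
move=> Sx; exists 1%N, (fun _ => x), (fun _ => 1); split => //.
by rewrite !big_ord1 scale1r.
Qed.
Lemma aff_sub S T : S `<=` T -> affine_hull S `<=` affine_hull T.
Proof. by move=> ST x [k [p [w [Sp [w1 ->]]]]]; exists k, p, w; split => // i; apply: ST. Qed.
Lemma aff_comb2 S u v (l : R) : affine_hull S u -> affine_hull S v ->
  affine_hull S (l *: u + (1 - l) *: v).
Proof.
move=> [k1 [p1 [w1 [S1 [s1 ->]]]]] [k2 [p2 [w2 [S2 [s2 ->]]]]].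
exists (k1 + k2)%N, (fun i => match @fintype.split k1 k2 i with inl j => p1 j | inr j => p2 j end),
  (fun i => match @fintype.split k1 k2 i with inl j => l * w1 j | inr j => (1 - l) * w2 j end).
split; first by move=> i; case: (fintype.split i).
rewrite !big_split_ord /=.
have E1 j : fintype.split (lshift k2 j) = inl j by rewrite -[lshift k2 j]/(unsplit (inl j)) unsplitK.
have E2 j : fintype.split (rshift k1 j) = inr j by rewrite -[rshift k1 j]/(unsplit (inr j)) unsplitK.
under eq_bigr do rewrite E1. under [X in _ + X = _]eq_bigr do rewrite E2.
under [X in _ = X + _]eq_bigr do rewrite E1. under [X in _ = _ + X]eq_bigr do rewrite E2.
rewrite -!mulr_sumr s1 s2 !mulr1 subrKC; split => //.
by rewrite !scaler_sumr; congr (_ + _); apply: eq_bigr => i _; rewrite scalerA.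
Qed.
Lemma ip_aff S c y : (forall x, S x -> ip x c = 1) -> affine_hull S y -> ip y c = 1.
Proof.
move=> H [k [p [w [Sp [s1 ->]]]]].
rewrite ip_suml (eq_bigr (fun i => w i)) // => i _.
by rewrite ipZl H // mulr1.
Qed.
End Aff.
Section Cone.
Variables (R : realType) (n : nat) (C : set 'rV[R]_n) (xbar : 'rV[R]_n).
Local Notation N := (normal_cone C xbar).
Lemma N_add y1 y2 : N y1 -> N y2 -> N (y1 + y2).
Proof. by move=> H1 H2 x Cx; rewrite !ipDl lerD // ?H1 ?H2. Qed.
Lemma N_scale (c : R) y : 0 <= c -> N y -> N (c *: y).
Proof. by move=> c0 H x Cx; rewrite !ipZl ler_wpM2l // H. Qed.
Lemma Fx_polar y : Fx C xbar y -> polar C y.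
Proof. by move=> [Ny fy] x Cx; rewrite -fy Ny. Qed.

Lemma keyK y1 z0 : Fx C xbar y1 -> affine_hull N z0 -> 0 < ip z0 xbar ->
  affine_hull (Fx C xbar) ((ip z0 xbar)^-1 *: z0).
Proof.
move=> Fy1 [k [p [w [Np [s1 ->]]]]].
set z := \sum_(i < k) w i *: p i => gpos.
set g := ip z xbar in gpos *.
pose f i := ip (p i) xbar.
have gE : g = \sum_(i < k) w i * f i.
  by rewrite /g /z ip_suml; apply: eq_bigr => i _; rewrite ipZl.
pose t := 1 + \sum_(i < k) `|f i|.
have S0 : 0 <= \sum_(i < k) `|f i| by apply: sumr_ge0 => i _; exact: normr_ge0.
have t0 : 0 < t by rewrite /t; lra.
have tf i : 0 < t + f i.
  rewrite /t (bigD1 i) //=.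
  have : 0 <= \sum_(j < k | j != i) `|f j| by apply: sumr_ge0 => j _; exact: normr_ge0.
  have := ler_norm (- f i); rewrite normrN. lra.
pose q i := (t + f i)^-1 *: (p i + t *: y1).
have Fq i : Fx C xbar (q i).
  split.
    apply: N_scale; first by rewrite invr_ge0 ltW.
    by apply: N_add; [exact: Np | apply: N_scale; [exact: ltW | exact: Fy1.1]].
  rewrite /q ipZl ipDl ipZl Fy1.2 mulr1 addrC -/(f i) mulVf //.
  by rewrite addrC gt_eqF.
pose A := \sum_(i < k) ((w i * (t + f i)) / (g + t)) *: q i.
have gt0 : 0 < g + t by rewrite addr_gt0.
have affA : affine_hull (Fx C xbar) A.
  exists k, q, (fun i => (w i * (t + f i)) / (g + t)); split => //; split => //.
  rewrite -mulr_suml.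
  have -> : \sum_(i < k) w i * (t + f i) = g + t.
    rewrite gE addrC; under eq_bigr do rewrite mulrDr.
    by rewrite big_split /= -mulr_suml s1 mul1r.
  by rewrite mulfV // gt_eqF.
pose l := (g + t) / g.
have -> : g^-1 *: z = l *: A + (1 - l) *: y1.
  have -> : l *: A = g^-1 *: z + (g^-1 * t) *: y1.
    rewrite /A scaler_sumr.
    have -> : \sum_(i < k) l *: ((w i * (t + f i) / (g + t)) *: q i) =
              \sum_(i < k) (w i / g) *: (p i + t *: y1).
      apply: eq_bigr => i _; rewrite /q !scalerA; congr (_ *: _).
      rewrite /l; field.
      by rewrite !gt_eqF.
    under eq_bigr do rewrite scalerDr.
    rewrite big_split /= /z scaler_sumr; congr (_ + _).
      by apply: eq_bigr => i _; rewrite scalerA mulrC.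
    under eq_bigr do rewrite scalerA.
    by rewrite -scaler_suml -mulr_suml -mulr_suml s1 mul1r.
  rewrite -addrA -scalerDl.
  have -> : g^-1 * t + (1 - l) = 0 by rewrite /l; field; rewrite gt_eqF.
  by rewrite scale0r addr0.
by apply: aff_comb2 => //; apply: aff_in.
Qed.
End Cone.
Lemma part2 (R : realType) (n : nat) (C : set 'rV[R]_n) xbar :
  relint (Fx C xbar) = [set y | relint (normal_cone C xbar) y /\ ip y xbar = 1].
Proof.
apply/seteqP; split => y /=.
- move=> [Fy [eps [e0 He]]].
  split; last exact: Fy.2.
  split; first exact: Fy.1.
  set X := ip xbar xbar; set Y := ip y y.
  have X0 : 0 <= X by apply: ipQ_ge0.
  have Y0 : 0 <= Y by apply: ipQ_ge0.
  set K := Num.min (1 / (4 * (X + 1))) (eps ^+ 2 / (8 * (1 + X * Y))).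
  have K0 : 0 < K.
    by rewrite lt_min; apply/andP; split; apply: divr_gt0; nra.
  exists (Num.min 1 K); split; first by rewrite lt_min ltr01 K0.
  move=> z Az Qz.
  set d := z - y in Qz.
  have QdK : ip d d < K.
    apply: (lt_le_trans Qz).
    have h1 : Num.min 1 K <= 1 by rewrite ge_min lexx.
    have h2 : Num.min 1 K <= K by rewrite ge_min lexx orbT.
    have h3 : 0 < Num.min 1 K by rewrite lt_min ltr01 K0.
    rewrite expr2; nra.
  have Qd0 : 0 <= ip d d by apply: ipQ_ge0.
  have [Qd1 Qd2] : ip d d < 1 / (4 * (X + 1)) /\ ip d d < eps ^+ 2 / (8 * (1 + X * Y)).
    by move: QdK; rewrite lt_min => /andP[].
  rewrite ltr_pdivlMr in Qd1; last nra.
  rewrite ltr_pdivlMr in Qd2; last nra.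
  set h := ip d xbar.
  have hX : h ^+ 2 <= ip d d * X by apply: CS.
  have zE : z = d + y by rewrite /d subrK.
  set g := ip z xbar.
  have gE : g = 1 + h by rewrite /g zE ipDl Fy.2 addrC.
  have hb : h ^+ 2 <= 1 / 4 by nra.
  have g12 : 1 / 2 <= g by rewrite gE; nra.
  have g0 : 0 < g by lra.
  have Az' := @keyK R n C xbar y z Fy Az g0.
  set ginv := g^-1 in Az'.
  have ginvg : ginv * g = 1 by rewrite mulVf // gt_eqF.
  have ginv0 : 0 < ginv by rewrite invr_gt0.
  have ginv2 : ginv <= 2 by nra.
  have E : ginv *: z - y = ginv *: (d + (- h) *: y).
    have Ey : y = ginv *: (g *: y) by rewrite scalerA ginvg scale1r.
    rewrite zE {2}Ey -scalerBr; congr (_ *: _).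
    by rewrite gE scalerDl scale1r scaleNr opprD addrA addrK.
  have Q1 : ip (ginv *: z - y) (ginv *: z - y) < eps ^+ 2.
    rewrite E ipQZ.
    have Q2 := @ipQD_le R n d ((- h) *: y).
    rewrite ipQZ sqrrN -/Y in Q2.
    have Q3 : 0 <= ip (d + (- h) *: y) (d + (- h) *: y) by apply: ipQ_ge0.
    have Q4 : ginv ^+ 2 <= 4 by rewrite expr2; nra.
    set Q := ip (d + (- h) *: y) (d + (- h) *: y) in Q2 Q3 *.
    have Q5 : ginv ^+ 2 * Q <= 4 * Q by rewrite ler_wpM2r.
    have Q6 : h ^+ 2 * Y <= ip d d * X * Y by rewrite ler_wpM2r.
    nra.
  have := He _ Az' Q1 => -[Nz' _].
  have -> : z = g *: (ginv *: z) by rewrite scalerA mulrC ginvg scale1r.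
  by apply: N_scale => //; exact: ltW.
- move=> [[Ny [eps [e0 He]]] fy].
  split; first by [].
  exists eps; split => // w Aw Qw; split.
    by apply: He => //; apply: aff_sub Aw => x [].
  by apply: (@ip_aff R n (Fx C xbar)) => // x [].
Qed.
Lemma cvx2 (R : realType) (n : nat) (C : set 'rV[R]_n) (Ccvx : @convex_set R 'rV[R]_n C)
  x y (s : R) : C x -> C y -> 0 <= s -> s <= 1 -> C (s *: x + (1 - s) *: y).
Proof.
move=> Cx Cy s0 s1.
have hs : Itv.spec (@Itv.num_sem R) (Itv.Real `[0%Z, 1%Z]) s.
  by rewrite /Itv.spec /Itv.num_sem /= num_real in_itv /= s0 s1.
pose t : {i01 R} := Itv.Def hs.
have := Ccvx x y t (mem_set Cx) (mem_set Cy).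
by rewrite inE.
Qed.

Section Part1.
Variables (R : realType) (n : nat) (C : set 'rV[R]_n).
Hypothesis Ccpt : @compact 'rV[R]_n C.
Hypothesis Ccvx : @convex_set R 'rV[R]_n C.

Lemma L1 xbar : C xbar -> polar C `&` [set y | ip xbar y = 1] = Fx C xbar.
Proof.
move=> Cx; apply/seteqP; split => y.
  move=> [Py Hy]; have Hy' : ip y xbar = 1 by rewrite ipC; exact: Hy.
  by split; [move=> x Cxx; rewrite Hy'; exact: Py | exact: Hy'].
move=> Fy; apply: conj; first exact: (@Fx_polar R n C xbar y Fy).
by move: Fy => [_ /= <-]; rewrite ipC.
Qed.

Lemma L3 a b : a != 0 -> (forall y, polar C y -> ip a y <= b) -> 0 < b.
Proof.
move=> a0 H.
have Qa := @ipQ_gt0 R n a a0.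
case: (pselect (exists c, C c)) => [[c Cc]|nC]; last first.
  have : polar C a by move=> x Cx; exfalso; apply: nC; exists x.
  by move/H => ?; lra.
have [m Cm Hm] : exists2 m, m \in C & forall t, t \in C -> ip a t <= ip a m.
  apply: EVT_max_rV => //; first by exists c.
  by apply: continuous_subspaceT; exact: cont_ip.
set M := ip a m in Hm.
set eps := (1 + `|M|)^-1.
have e0 : 0 < eps by rewrite invr_gt0; have := normr_ge0 M; lra.
have eM : eps * (1 + `|M|) = 1 by rewrite mulVf //; have := normr_ge0 M; rewrite gt_eqF //; lra.
have : polar C (eps *: a).
  move=> x Cx; rewrite ipZl.
  have := Hm x (mem_set Cx); have := ler_norm M; nra.
move/H; rewrite ipZr => ?; nra.
Qed.

Lemma L2 z y0 : (forall y, polar C y -> ip z y <= 1) -> polar C y0 -> ip z y0 = 1 -> C z.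
Proof.
move=> H Py0 zy0.
case: (pselect (C z)) => // nCz; exfalso.
case: (pselect (exists c, C c)) => [[c Cc]|nC]; last first.
  have : polar C (y0 + y0) by move=> x Cx; exfalso; apply: nC; exists x.
  by move/H; rewrite ipDr zy0; lra.
have [p Cp Hp] : exists2 p, p \in C & forall t, t \in C ->
    ip (z - p) (z - p) <= ip (z - t) (z - t).
  apply: EVT_min_rV => //; first by exists c.
  by apply: continuous_subspaceT; exact: cont_dist.
rewrite inE in Cp.
set d := z - p in Hp.
have dE : d = z - p by [].
clearbody d.
have claim : forall c, C c -> ip d (c - p) <= 0.
  move=> c' Cc'; rewrite leNgt; apply/negP => m0.
  set e := c' - p in m0.
  have eE : e = c' - p by [].
  clearbody e.
  set m := ip d e in m0.
  have Qe := @ipQ_ge0 R n e.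
  set s := m / (ip e e + m).
  have sE : s * (ip e e + m) = m by rewrite /s mulfVK // gt_eqF //; lra.
  have s0 : 0 < s by rewrite divr_gt0 //; lra.
  have s1 : s <= 1 by rewrite ler_pdivrMr; lra.
  have Cc'' := @cvx2 R n C Ccvx c' p s Cc' Cp (ltW s0) s1.
  have := Hp _ (mem_set Cc'').
  have -> : z - (s *: c' + (1 - s) *: p) = d - s *: e.
    by apply/rowP => i; rewrite dE eE !mxE; ring.
  rewrite ipBl !ipBr !ipZl !ipZr (@ipC R n e d) -/m => Hq.
  nra.
have dn0 : d != 0.
  apply/negP => /eqP d0; apply: nCz.
  by move/eqP: d0; rewrite dE subr_eq0 => /eqP ->.
have Qd := @ipQ_gt0 R n d dn0.
set P := ip d p.
set s := (1 + `|P|)^-1.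
have s0 : 0 < s by rewrite invr_gt0; have := normr_ge0 P; lra.
have sP : s * (1 + `|P|) = 1 by rewrite mulVf //; have := normr_ge0 P; rewrite gt_eqF //; lra.
set k := 1 + s * P.
have k0 : 0 < k by have := ler_norm (- P); rewrite normrN /k; nra.
set y := k^-1 *: (y0 + s *: d).
have Py : polar C y.
  move=> x Cx; rewrite /y ipZl ipDl ipZl.
  have h1 := Py0 x Cx.
  have h2 := claim x Cx; rewrite ipBr -/P in h2.
  rewrite ler_pdivrMl // mulr1 /k; nra.
have := H y Py.
rewrite /y ipZr ipDr ipZr zy0 (@ipC R n z d).
have -> : z = d + p by rewrite dE subrK.
rewrite ipDr -/P ler_pdivrMl // mulr1 /k; nra.
Qed.

Lemma part1 F : (exposed_face (polar C) F /\ F !=set0 /\ F <> polar C) <->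
     (F !=set0 /\ exists xbar, C xbar /\ F = Fx C xbar).
Proof.
split.
- move=> [[H [[a [b [a0 [HE [sup [y0 [Py0 ey0]]]]]]] FE]] [Fne _]].
  have b0 := @L3 a b a0 sup.
  set z := b^-1 *: a.
  have Cz : C z.
    apply: (@L2 z y0) => //.
      by move=> y Py; rewrite /z ipZl ler_pdivrMl // mulr1; exact: sup.
    by rewrite /z ipZl ey0 mulVf // gt_eqF.
  split => //; exists z; split => //.
  rewrite FE HE -(@L1 z Cz); apply/seteqP; split => y [Py /= Hy]; apply: conj => //=.
    by rewrite /z ipZl Hy mulVf // gt_eqF.
  move: Hy; rewrite /z ipZl => Hy.
  by rewrite -[ip a y](mulVKf (lt0r_neq0 b0)) Hy mulr1.
- move=> [[y Fy] [xbar [Cx FE]]].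
  have Fy' := Fy; rewrite FE in Fy'.
  split; last split.
  + exists [set y | ip xbar y = 1]; split; last by rewrite FE (@L1 xbar Cx).
    exists xbar, 1; split.
      apply/negP => /eqP x0; have := Fy'.2; rewrite x0 ip0r => /eqP.
      by rewrite eq_sym oner_eq0.
    split => //; split; first by move=> y' Py'; rewrite ipC; exact: Py'.
    by exists y; split; [exact: (@Fx_polar R n C xbar y Fy') | rewrite ipC; exact: Fy'.2].
  + by exists y.
  + move=> FP.
    have : polar C 0 by move=> x _; rewrite ip0l ler01.
    rewrite -FP FE => -[_]; rewrite ip0l => /eqP.
    by rewrite eq_sym oner_eq0.
Qed.
End Part1.

Theorem theorem4p4 (R : realType) (n : nat) (C : set 'rV[R]_n)
  (Ccpt : @compact 'rV[R]_n C) (Ccvx : @convex_set R 'rV[R]_n C) :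
  (forall F : set 'rV[R]_n,
     (exposed_face (polar C) F /\ F !=set0 /\ F <> polar C) <->
     (F !=set0 /\ exists xbar, C xbar /\ F = Fx C xbar)) /\
  (forall xbar, C xbar -> Fx C xbar !=set0 ->
     relint (Fx C xbar) =
     [set y | relint (normal_cone C xbar) y /\ ip y xbar = 1]).
Proof.
split; first by move=> F; exact: part1.
by move=> xbar _ _; exact: part2.
Qed.
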